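(* For $p\ge3$ we have $\mathcal E_p=\langle\mathcal E_3\rangle_{\mathrm{GL}_p(K)}$, where $\mathcal E_3$ is viewed as the subalgebra of $\mathcal E_p$ consisting of the maps depending only on the first three components.
   Context: $K$ is a field of characteristic $0$; $so_3(K)$ is the space of $3\times3$ skew-symmetric matrices. $T_p=\{t^{(k)}_{ij}\mid1\le i<j\le3,\ 1\le k\le p\}$ are commuting indeterminates; $K[T_p]$ is identified with polynomial functions on $so_3(K)^{\oplus p}$ and $M_3(K[T_p])$ with polynomial maps $so_3(K)^{\oplus p}\to M_3(K)$. $\mathcal E_p$ is the subalgebra of $\mathrm{SO}_3(K)$-equivariant polynomial maps ($\mathrm{SO}_3(K)$ acting by simultaneous conjugation on $so_3(K)^{\oplus p}$ and by conjugation on $M_3(K)$). $\mathrm{GL}_p(K)$ acts on $K[T_p]$ by $g\cdot t^{(k)}_{ij}=\sum_l g_{lk}t^{(l)}_{ij}$ and entrywise on $M_3(K[T_p])$; $\langle U\rangle_{\mathrm{GL}_p(K)}$ is the $\mathrm{GL}_p(K)$-submodule generated by $U$. *)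

(* Defs.v *)
From HB Require Import structures.
From mathcomp Require Import all_boot all_order all_algebra.
From mathcomp Require Import mpoly.
Set Implicit Arguments. Unset Strict Implicit. Unset Printing Implicit Defensive.
Import Order.TTheory GRing.Theory Num.Theory.
Local Open Scope ring_scope.

(* The three index pairs (i,j), i<j, of a 3x3 matrix, numbered by e : 'I_3:
   e = 0 <-> (0,1), e = 1 <-> (0,2), e = 2 <-> (1,2). *)
Definition pair_i (e : 'I_3) : 'I_3 := if val e == 2%N then inord 1 else inord 0.
Definition pair_j (e : 'I_3) : 'I_3 := if val e == 0%N then inord 1 else inord 2.

(* K[T_p]: polynomials in the 3p variables t^(k)_e, the variable t^(k)_e
   being 'X_(mxvec_index k e) (k : 'I_p is the component, e the pair). *)
Notation polT K p := {mpoly K[p * 3]}.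
Definition tvar (K : fieldType) (p : nat) (k : 'I_p) (e : 'I_3) : polT K p :=
  'X_(mxvec_index k e).

Definition skew (K : fieldType) (M : 'M[K]_3) : Prop := M^T = - M.
Definition SO3 (K : fieldType) (g : 'M[K]_3) : Prop :=
  g^T *m g = 1%:M /\ \det g = 1.

Definition coords (K : fieldType) (p : nat) (A : 'I_p -> 'M[K]_3) :
  'I_(p * 3) -> K :=
  fun x => mxvec (\matrix_(k < p, e < 3) A k (pair_i e) (pair_j e)) 0 x.

Definition evalF (K : fieldType) (p : nat) (F : 'M[polT K p]_3)
  (A : 'I_p -> 'M[K]_3) : 'M[K]_3 :=
  map_mx (fun q => q.@[coords A]) F.

Definition equivariant (K : fieldType) (p : nat) (F : 'M[polT K p]_3) : Prop :=
  forall (g : 'M[K]_3) (A : 'I_p -> 'M[K]_3),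
    SO3 g -> (forall k, skew (A k)) ->
    evalF F (fun k => g *m A k *m g^T) = g *m evalF F A *m g^T.

Definition depends_on_first3 (K : fieldType) (p : nat) (F : 'M[polT K p]_3)
  : Prop :=
  forall A B : 'I_p -> 'M[K]_3,
    (forall k, skew (A k)) -> (forall k, skew (B k)) ->
    (forall k : 'I_p, (k < 3)%N -> A k = B k) ->
    evalF F A = evalF F B.

(* GL_p(K) action on K[T_p]:  g . t^(k)_e = sum_l g_{lk} t^(l)_e,
   extended as a K-algebra endomorphism (substitution). *)
Definition gl_images (K : fieldType) (p : nat) (g : 'M[K]_p) :
  (p * 3).-tuple (polT K p) :=
  let r := mxvec (\matrix_(k < p, e < 3) \sum_(l < p) (g l k)%:MP * tvar K l e)
  in [tuple r 0 x | x < p * 3].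

Definition glact (K : fieldType) (p : nat) (g : 'M[K]_p) (q : polT K p)
  : polT K p := comp_mpoly (gl_images g) q.

Definition glact_mx (K : fieldType) (p : nat) (g : 'M[K]_p)
  (F : 'M[polT K p]_3) : 'M[polT K p]_3 := map_mx (glact g) F.

Definition GLspan (K : fieldType) (p : nat) (U : 'M[polT K p]_3 -> Prop)
  (F : 'M[polT K p]_3) : Prop :=
  forall S : 'M[polT K p]_3 -> Prop,
    S 0 ->
    (forall G H, S G -> S H -> S (G + H)) ->
    (forall (c : K) G, S G -> S (c%:MP *: G)) ->
    (forall (g : 'M[K]_p) G, g \in unitmx -> S G -> S (glact_mx g G)) ->
    (forall G, U G -> S G) ->
    S F.

(* Main.v *)
Require Import Defs.
From HB Require Import structures.
From mathcomp Require Import all_boot all_order all_algebra.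
From mathcomp Require Import mpoly.
From mathcomp Require Import zify.
From Stdlib Require Import Classical FunctionalExtensionality.
Set Implicit Arguments. Unset Strict Implicit. Unset Printing Implicit Defensive.
Import Order.TTheory GRing.Theory Num.Theory.
Local Open Scope ring_scope.

Section SpanFin.
Variables (F : fieldType) (N : nat) (T : Type) (x0 : T) (P : T -> Prop)
  (v : T -> 'rV[F]_N).

Definition Sm (s : seq T) := (\sum_(i < size s) <<v (nth x0 s i)>>)%MS.

Lemma Sm_cons x s : Sm (x :: s) = (<<v x>> + Sm s)%MS.
Proof. by rewrite /Sm big_ord_recl. Qed.

Lemma span_fin : exists s : seq T, (forall i : 'I_(size s), P (nth x0 s i)) /\
  (forall x, P x -> (v x <= Sm s)%MS).
Proof.
suff H : forall k s, (forall i : 'I_(size s), P (nth x0 s i)) ->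
   (N - \rank (Sm s) <= k)%N -> exists s' : seq T,
   (forall i : 'I_(size s'), P (nth x0 s' i)) /\ (forall x, P x -> (v x <= Sm s')%MS).
  by apply: (H N [::]) => //; [case | exact: leq_subr].
elim=> [|k IH] s Ps hk.
  exists s; split=> // x _; apply: submx_full.
  by rewrite /row_full eqn_leq rank_leq_col -subn_eq0 -leqn0.
case: (classic (forall x, P x -> (v x <= Sm s)%MS)) => [h|h]; first by exists s.
have [x hx] := not_all_ex_not _ _ h.
have [Px nx] := imply_to_and _ _ hx.
apply: (IH (x :: s)).
  case=> [[|i]] /= hi; first by [].
  by have := Ps (Ordinal (hi : (i < size s)%N)).
rewrite Sm_cons.
have lt : (Sm s < <<v x>> + Sm s)%MS.
  rewrite ltmxE addsmxSr /=; apply/negP => hs; apply: nx.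
  apply: submx_trans hs; apply: submx_trans (addsmxSl _ _).
  by rewrite genmxE.
have := rank_ltmx lt => hr.
have := rank_leq_col (<<v x>> + Sm s)%MS.
move: hk; set a := \rank (Sm s); set b := \rank _ => hk hb.
lia.
Qed.
End SpanFin.

Lemma proj_exists (R : realFieldType) N m (S : 'M[R]_(m,N)) (u : 'rV_N) :
  exists c : 'rV_m, (u - c *m S) *m S^T = 0.
Proof.
set A := S *m S^T; set C := cokermx A.
have X0 : S^T *m C = 0.
  have h : (S^T *m C)^T *m (S^T *m C) = 0.
    by rewrite trmx_mul trmxK mulmxA -(mulmxA _ S) -/A -mulmxA mulmx_coker mulmx0.
  apply/matrixP => k j; rewrite mxE.
  have := congr1 (fun M : 'M[R]_m => M j j) h; rewrite !mxE => /eqP.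
  rewrite psumr_eq0 => [/allP hall|i _]; last by rewrite mxE -expr2 sqr_ge0.
  have := hall k (mem_index_enum _); rewrite /= !mxE -expr2 sqrf_eq0 => /eqP.
  by [].
have : (u *m S^T <= A)%MS by rewrite submxE -mulmxA X0 mulmx0.
case/submxP => c hc; exists c.
by rewrite mulmxBl hc mulmxA subrr.
Qed.
Section Vec.
Variables (R : comRingType) (p D : nat).
Definition Wd := {d : 'I_D & {ffun 'I_d -> 'I_p * 'I_p}}.
Definition mon (M : 'M[R]_p) (w : Wd) : R := \prod_(t < tag w) M (tagged w t).1 (tagged w t).2.
Definition vec (M : 'M[R]_p) : 'rV[R]_#|{: Wd}| := \row_i mon M (enum_val i).
Definition pairing (M Q : 'M[R]_p) := \sum_(j : 'I_p * 'I_p) M j.1 j.2 * Q j.1 j.2.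

Lemma prod_pair d (M Q : 'M[R]_p) :
  \sum_(f : {ffun 'I_d -> 'I_p * 'I_p}) \prod_(t < d) (M (f t).1 (f t).2 * Q (f t).1 (f t).2)
  = (pairing M Q) ^+ d.
Proof.
rewrite -(bigA_distr_bigA (fun (t : 'I_d) (j : 'I_p * 'I_p) => M j.1 j.2 * Q j.1 j.2)) /=.
by rewrite prodr_const card_ord.
Qed.

Lemma vec_dot (M Q : 'M[R]_p) :
  (vec M *m (vec Q)^T) 0 0 = \sum_(d < D) (pairing M Q) ^+ d.
Proof.
rewrite mxE.
under eq_bigr do rewrite !mxE.
rewrite -(big_enum_val (fun w => mon M w * mon Q w)) /=.
rewrite -(sig_big_dep (J := fun d : 'I_D => {ffun 'I_d -> 'I_p * 'I_p}) xpredT (fun _ _ => true)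
  (fun (d : 'I_D) (f : {ffun 'I_d -> 'I_p * 'I_p}) => mon M (Tagged _ f) * mon Q (Tagged _ f))) /=.
apply: eq_bigr => d _; rewrite -prod_pair; apply: eq_bigr => f _.
by rewrite /mon /= -big_split.
Qed.
End Vec.

Lemma poly_coef0 (F : numFieldType) D (b : nat -> F) :
  (forall t : F, \sum_(d < D) b d * t ^+ d = 0) -> forall d, (d < D)%N -> b d = 0.
Proof.
move=> h d hd.
have P0 : \poly_(i < D) b i = 0.
  apply: (@roots_geq_poly_eq0 _ _ [seq i%:R | i <- iota 0 D]).
  - by apply/allP => x /mapP [i _ ->]; rewrite /root horner_poly h.
  - rewrite map_inj_uniq ?iota_uniq // => i j /eqP; rewrite eqr_nat => /eqP //.
  - by rewrite size_map size_iota size_poly.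
by have := congr1 (fun q : {poly F} => q`_d) P0; rewrite coef_poly hd coef0.
Qed.

Definition Zset (F : fieldType) p (M : 'M[F]_p) := exists Y a : 'M[F]_(p,3), M = Y *m a^T.

Lemma rat_main p D : exists r (cs : 'I_r -> rat) (Ms : 'I_r -> 'M[rat]_p),
  (forall i, Zset (Ms i)) /\
  forall (Y a : 'M[rat]_(p,3)) d, (d < D)%N ->
    \sum_(i < r) cs i * pairing (Ms i) (Y *m a^T) ^+ d = pairing 1%:M (Y *m a^T) ^+ d.
Proof.
have [s [Ps Hs]] := span_fin (0 : 'M[rat]_p) (@Zset _ p) (@vec _ p D).
pose r := size s; pose Ms (i : 'I_r) := nth 0 s i.
pose Bm := \matrix_(i < r) vec D (Ms i).
have sB : forall M, Zset M -> (vec D M <= Bm)%MS.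
  move=> M /Hs h; apply: submx_trans h _; apply/sumsmx_subP => i _.
  rewrite genmxE; have -> : vec D (nth 0 s i) = row i Bm by apply/rowP => j; rewrite !mxE.
  exact: row_sub.
have [c hc] := proj_exists Bm (vec D 1%:M).
exists r, (fun i => c 0 i), Ms; split; first by move=> i; exact: Ps.
have key : forall Q, Zset Q -> \sum_(d < D) pairing 1%:M Q ^+ d =
     \sum_(d < D) \sum_(i < r) c 0 i * pairing (Ms i) Q ^+ d.
  move=> Q /sB /submxP [y hy].
  have : ((vec D 1%:M - c *m Bm) *m (vec D Q)^T) 0 0 = 0.
    by rewrite hy trmx_mul mulmxA hc mul0mx mxE.
  rewrite mulmxBl => /eqP; rewrite [X in X == 0]mxE [X in _ + X == 0]mxE subr_eq0 vec_dot => /eqP ->.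
  rewrite (mulmx_sum_row c Bm) mulmx_suml summxE exchange_big /=; apply: eq_bigr => i _.
  rewrite -scalemxAl [LHS]mxE -mulr_sumr; have -> : row i Bm = vec D (Ms i).
    by apply/rowP => j; rewrite !mxE.
  by rewrite vec_dot.
move=> Y a d hd.
pose b k := \sum_(i < r) c 0 i * pairing (Ms i) (Y *m a^T) ^+ k - pairing 1%:M (Y *m a^T) ^+ k.
suff : b d = 0 by move/eqP; rewrite subr_eq0 => /eqP.
apply: (poly_coef0 (b := b) _ hd) => t.
have zt : Zset (t *: (Y *m a^T)) by exists (t *: Y), a; rewrite scalemxAl.
have := key _ zt.
have pZ : forall M, pairing M (t *: (Y *m a^T)) = t * pairing M (Y *m a^T).
  by move=> M; rewrite /pairing mulr_sumr; apply: eq_bigr => j _; rewrite mxE mulrCA.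
rewrite !(eq_bigr _ (fun d _ => erefl _)).
under eq_bigr do rewrite pZ exprMn.
under [in RHS]eq_bigr do under eq_bigr do rewrite pZ exprMn.
move=> e; rewrite /b; under eq_bigr do rewrite mulrBl mulr_suml.
rewrite sumrB; apply/eqP; rewrite subr_eq0; apply/eqP.
have -> : \sum_(k < D) pairing 1%:M (Y *m a^T) ^+ k * t ^+ k =
  \sum_(k < D) t ^+ k * pairing 1%:M (Y *m a^T) ^+ k by apply: eq_bigr => k _; rewrite mulrC.
rewrite e; apply: eq_bigr => k _; apply: eq_bigr => i _.
by rewrite mulrCA mulrA [_ * t ^+ k]mulrC -mulrA.
Qed.
Section RatrK.
Variables (K : fieldType) (charK0 : [pchar K] =i pred0).

Lemma nz_denK x : (denq x)%:~R != 0 :> K.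
Proof.
have := denq_gt0 x; case: (denq x) => // n hn; rewrite -pmulrn.
have /pcharf0P h := charK0; rewrite h; apply/negP => /eqP n0.
by move: hn; rewrite n0.
Qed.

Lemma ratrK_add x y : @ratr K (x + y) = @ratr K x + @ratr K y.
Proof.
have injZtoQ: @injective rat int intr by apply: intr_inj.
have nz_den := nz_denK.
apply: (canLR (mulfK (nz_den _))); apply: (mulIf (nz_den x)).
rewrite mulrAC mulrDl divfK ?nz_den // mulrAC -!rmorphM.
apply: (mulIf (nz_den y)); rewrite mulrAC mulrDl divfK ?nz_den //.
rewrite -!(rmorphM, rmorphD); congr _%:~R; apply: injZtoQ.
rewrite !(rmorphM, rmorphD) /= [_ + _]lock /= -lock !numqE.
by rewrite (mulrAC y) -!mulrDl -mulrA mulrAC !mulrA.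
Qed.

Lemma ratrK_mul x y : @ratr K (x * y) = @ratr K x * @ratr K y.
Proof.
have injZtoQ: @injective rat int intr by apply: intr_inj.
have nz_den := nz_denK.
rewrite /ratr mulrC mulrAC; apply: canLR (mulKf (nz_den _)) _; rewrite !mulrA.
do 2!apply: canRL (mulfK (nz_den _)) _; rewrite -!rmorphM; congr _%:~R.
apply: injZtoQ; rewrite !rmorphM [x * y]lock /= !numqE -lock.
by rewrite -!mulrA mulrA mulrCA -!mulrA (mulrCA y).
Qed.

Lemma ratrK0 : @ratr K 0 = 0. Proof. by rewrite (ratr_nat K 0). Qed.
Lemma ratrK1 : @ratr K 1 = 1. Proof. by rewrite (ratr_nat K 1). Qed.

Lemma ratrK_sum (I : Type) (r : seq I) (P : pred I) (F : I -> rat) :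
  @ratr K (\sum_(i <- r | P i) F i) = \sum_(i <- r | P i) @ratr K (F i).
Proof. exact: (big_morph _ ratrK_add ratrK0). Qed.

Lemma ratrK_prod (I : Type) (r : seq I) (P : pred I) (F : I -> rat) :
  @ratr K (\prod_(i <- r | P i) F i) = \prod_(i <- r | P i) @ratr K (F i).
Proof. exact: (big_morph _ ratrK_mul ratrK1). Qed.

Lemma ratrK_exp x n : @ratr K (x ^+ n) = @ratr K x ^+ n.
Proof. by elim: n => [|n IH]; rewrite ?expr0 ?ratrK1 // !exprS ratrK_mul IH. Qed.
End RatrK.

Definition natmx (F : fieldType) m n (A : 'I_m -> 'I_n -> nat) : 'M[F]_(m,n) :=
  \matrix_(i, j) (A i j)%:R.

Lemma K_main (K : fieldType) (charK0 : [pchar K] =i pred0) p D :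
  exists r (cs : 'I_r -> K) (Ms : 'I_r -> 'M[K]_p),
  (forall i, Zset (Ms i)) /\
  forall (Yn an : 'I_p -> 'I_3 -> nat) d, (d < D)%N ->
    \sum_(i < r) cs i * pairing (Ms i) (natmx K Yn *m (natmx K an)^T) ^+ d
    = pairing 1%:M (natmx K Yn *m (natmx K an)^T) ^+ d.
Proof.
have [r [cs [Ms [Zs H]]]] := rat_main p D.
have fD := ratrK_add charK0; have fM := ratrK_mul charK0.
have fS := ratrK_sum charK0; have fX := ratrK_exp charK0.
have fmul : forall m n k (A : 'M[rat]_(m,n)) (B : 'M[rat]_(n,k)),
    map_mx (@ratr K) (A *m B) = map_mx (@ratr K) A *m map_mx (@ratr K) B.
  by move=> m n k A B; apply/matrixP => i j; rewrite !mxE fS; apply: eq_bigr => l _;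
     rewrite fM !mxE.
have fpair : forall M Q : 'M[rat]_p, (@ratr K) (pairing M Q) = pairing (map_mx (@ratr K) M) (map_mx (@ratr K) Q).
  by move=> M Q; rewrite /pairing fS; apply: eq_bigr => j _; rewrite fM !mxE.
exists r, (fun i => (@ratr K) (cs i)), (fun i => map_mx (@ratr K) (Ms i)); split.
  move=> i; have [Y [a ->]] := Zs i; exists (map_mx (@ratr K) Y), (map_mx (@ratr K) a).
  by rewrite fmul -map_trmx.
move=> Yn an d hd.
have hQ : map_mx (@ratr K) (natmx rat Yn *m (natmx rat an)^T) = natmx K Yn *m (natmx K an)^T.
  rewrite fmul -map_trmx; congr (_ *m _^T); apply/matrixP => i j; rewrite !mxE ratr_nat //.
have h1 : map_mx (@ratr K) 1%:M = 1%:M :> 'M[K]_p.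
  apply/matrixP => i j; rewrite !mxE; case: (i == j); rewrite /= ?ratrK1 ?ratrK0 //.
have := congr1 (@ratr K) (H (natmx rat Yn) (natmx rat an) d hd).
rewrite fS fX fpair hQ h1 => <-; apply: eq_bigr => i _.
by rewrite fM fX fpair hQ.
Qed.


Section Pol.
Variables (B : comRingType) (d : nat).
Definition img (f : {ffun 'I_d -> 'I_d}) : {set 'I_d} := f @: setT.

Lemma IE (A : {set 'I_d}) :
  \sum_(S : {set 'I_d}) (A \subset S)%:R * (-1)^+(d - #|S|) = (A == setT)%:R :> B.
Proof.
pose g i : B := if i \in A then 0 else -1.
have := @bigA_distr B 0 1 *%R +%R _ (fun _ : 'I_d => (1 : B)) g; rewrite /= => e.
have lhs : \prod_(i < d) (1 + g i) = (A == setT)%:R.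
  case: eqP => [hA|nA].
    by apply: big1 => i _; rewrite /g hA inE addr0.
  have [i iA] : exists i, i \notin A.
    case: (boolP [exists i, i \notin A]) => [/existsP //|/existsPn h].
    by case: nA; apply/setP => i; rewrite inE; have := h i; rewrite negbK.
  by rewrite (bigD1 i) //= /g (negPf iA) subrr mul0r.
rewrite -lhs e; apply: eq_bigr => S _.
rewrite (bigID (fun i => i \in S)) /= big1 ?mul1r; last by move=> i ->.
case: (boolP (A \subset S)) => AS.
  rewrite mul1r (eq_bigr (fun _ => -1)); last first.
    by move=> i /negPf iS; rewrite iS /g; case: ifP => // iA; move: (subsetP AS i iA); rewrite iS.
  rewrite prodr_const; congr (_ ^+ _).
  by rewrite -{1}(card_ord d) -(cardC (mem S)) addKn.
rewrite mul0r; have [i /andP [iA iS]] : exists i, (i \in A) && (i \notin S).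
  case: (boolP [exists i, (i \in A) && (i \notin S)]) => [/existsP //|/existsPn h].
  by case/negP: AS; apply/subsetP => i iA; have := h i; rewrite iA /= negbK.
by rewrite (bigD1 i) //= (negPf iS) /g iA mul0r.
Qed.

Lemma Gpol (h : {ffun 'I_d -> 'I_d} -> B) :
  \sum_(S : {set 'I_d}) (-1)^+(d - #|S|) *
     \sum_(f : {ffun 'I_d -> 'I_d}) (img f \subset S)%:R * h f
  = \sum_(f : {ffun 'I_d -> 'I_d}) (img f == setT)%:R * h f.
Proof.
under eq_bigr do rewrite mulr_sumr.
rewrite exchange_big /=; apply: eq_bigr => f _.
rewrite -IE mulr_suml; apply: eq_bigr => S _.
by rewrite !mulrA [(-1) ^+ _ * _]mulrC.
Qed.

Lemma img_full f : (img f == setT) = injectiveb f.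
Proof.
rewrite eqEcard subsetT /= cardsT card_ord.
apply/idP/injectiveP => [h | inj].
  have : #|img f| == #|[set: 'I_d]|.
    by rewrite eqn_leq subset_leq_card ?subsetT //= cardsT card_ord.
  by move/imset_injP => hi x y; apply: hi; rewrite inE.
by rewrite /img card_imset // cardsT card_ord.
Qed.

Lemma sym_count (h : {ffun 'I_d -> 'I_d} -> B) :
  (forall f : {ffun 'I_d -> 'I_d}, injective f -> h f = h [ffun t => t]) ->
  \sum_(f : {ffun 'I_d -> 'I_d}) (img f == setT)%:R * h f = (d`!)%:R * h [ffun t => t].
Proof.
move=> hs.
rewrite (eq_bigr (fun f : {ffun 'I_d -> 'I_d} => (injectiveb f)%:R * h [ffun t => t])); last first.
  move=> f _; rewrite img_full; case: (boolP (injectiveb f)) => [/injectiveP inj|_]; last by rewrite !mul0r.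
  by rewrite (hs f inj).
rewrite -mulr_suml; congr (_ * _).
rewrite -natr_sum; congr (_%:R).
have := card_inj_ffuns 'I_d 'I_d; rewrite card_ord ffactnn => <-.
rewrite cardsE -sum1_card [RHS]big_mkcond /=.
apply: eq_bigr => f _.
have -> : (f \in (fun x : {ffun 'I_d -> 'I_d} => uniq [seq x i | i <- enum 'I_d])) = injectiveb f by [].
by case: (injectiveb f).
Qed.

Lemma prod_mask (k : 'I_d -> 'I_d -> B) (S : {set 'I_d}) :
  \prod_(t < d) \sum_(s in S) k t s =
  \sum_(g : {ffun 'I_d -> 'I_d}) (img g \subset S)%:R * \prod_(t < d) k t (g t).
Proof.
under eq_bigr do rewrite big_mkcond /=.
rewrite (bigA_distr_bigA (fun t s => if s \in S then k t s else 0)) /=.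
apply: eq_bigr => g _.
case: (boolP (img g \subset S)) => h.
  rewrite mul1r; apply: eq_bigr => t _; rewrite (subsetP h) //.
  by apply/imsetP; exists t; rewrite ?inE.
rewrite mul0r.
have [t /negPf ht] : exists t, g t \notin S.
  case: (boolP [exists t, g t \notin S]) => [/existsP //|/existsPn hh].
  case/negP: h; apply/subsetP => x /imsetP [t _ ->].
  by have := hh t; rewrite negbK.
by rewrite (bigD1 t) //= ht mul0r.
Qed.

Lemma polar_prod (y : 'I_d -> B) :
  (d`!)%:R * \prod_(t < d) y t =
  \sum_(S : {set 'I_d}) (-1)^+(d - #|S|) * (\sum_(t in S) y t)^+d.
Proof.
have e : forall S : {set 'I_d}, (\sum_(t in S) y t)^+d =
   \sum_(g : {ffun 'I_d -> 'I_d}) (img g \subset S)%:R * \prod_(s < d) y (g s).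
  move=> S; rewrite -(prod_mask (fun _ t => y t)).
  by rewrite prodr_const card_ord.
under [RHS]eq_bigr do rewrite e.
rewrite Gpol (sym_count (h := fun g : {ffun 'I_d -> 'I_d} => \prod_(s < d) y (g s))).
  by congr (_ * _); apply: eq_bigr => s _; rewrite ffunE.
move=> g inj.
rewrite [RHS](reindex_inj inj) /=; by apply: eq_bigr => s _; rewrite ffunE.
Qed.
End Pol.


Section Tensor.
Variables (B : comRingType) (J : finType) (d : nat).

Lemma tensor_pol (z : {ffun 'I_d -> J} -> B)
  (zsym : forall (f : {ffun 'I_d -> J}) (g : {ffun 'I_d -> 'I_d}), injective g -> z [ffun t => f (g t)] = z f)
  (Q : 'I_d -> J -> B) :
  (d`!)%:R * \sum_f z f * \prod_(t < d) Q t (f t) =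
  \sum_(S : {set 'I_d}) (-1)^+(d - #|S|) *
     \sum_(f : {ffun 'I_d -> J}) z f * \prod_(t < d) \sum_(s in S) Q s (f t).
Proof.
pose h (g : {ffun 'I_d -> 'I_d}) := \sum_(f : {ffun 'I_d -> J}) z f * \prod_(t < d) Q (g t) (f t).
have e : forall S : {set 'I_d},
  \sum_(f : {ffun 'I_d -> J}) z f * \prod_(t < d) \sum_(s in S) Q s (f t) =
  \sum_(g : {ffun 'I_d -> 'I_d}) (img g \subset S)%:R * h g.
  move=> S.
  under eq_bigr do rewrite (prod_mask (fun t s => Q s (_ t))) mulr_sumr.
  rewrite exchange_big /=; apply: eq_bigr => g _; rewrite /h mulr_sumr.
  by apply: eq_bigr => f _; rewrite mulrCA.
under [RHS]eq_bigr do rewrite e.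
rewrite Gpol (sym_count (h := h)).
  by congr (_ * _); rewrite /h; apply: eq_bigr => f _; congr (_ * _);
    apply: eq_bigr => t _; rewrite ffunE.
move=> g inj; rewrite /h.
have [ginv gK ginvK] := injF_bij inj.
pose phi (f : {ffun 'I_d -> J}) : {ffun 'I_d -> J} := [ffun t => f (g t)].
have phi_inj : injective phi.
  move=> f1 f2 /ffunP eq; apply/ffunP => t; have := eq (ginv t).
  by rewrite !ffunE ginvK.
rewrite (reindex_inj phi_inj) /=; apply: eq_bigr => f _.
rewrite zsym //; congr (_ * _).
rewrite [RHS](reindex_inj inj) /=; apply: eq_bigr => t _.
by rewrite !ffunE.
Qed.
End Tensor.


Section KSide.
Variables (K : fieldType) (p : nat).
Local Notation B := (polT K p).

Lemma glact_tvar (M : 'M[K]_p) k e :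
  glact M (tvar K k e) = \sum_(l < p) M l k *: tvar K l e.
Proof.
rewrite /glact /tvar comp_mpolyXU -tnth_nth tnth_mktuple mxvecE mxE.
by apply: eq_bigr => l _; rewrite mul_mpolyC.
Qed.

Variable a : 'I_p -> 'I_3 -> nat.
Definition lin : B := \sum_(k < p) \sum_(e < 3) (a k e)%:R *: tvar K k e.
Definition Pm (j : 'I_p * 'I_p) : B := \sum_(e < 3) (a j.2 e)%:R *: tvar K j.1 e.
Definition LM (M : 'M[K]_p) : B := \sum_(j : 'I_p * 'I_p) M j.1 j.2 *: Pm j.

Lemma glact_lin M : glact M lin = LM M.
Proof.
rewrite /glact /lin /LM rmorph_sum /=.
rewrite -(pair_bigA _ (fun l k => M l k *: Pm (l, k))) /= exchange_big /=.
apply: eq_bigr => k _; rewrite rmorph_sum /=.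
under eq_bigr do rewrite linearZ /= -/(glact M _) glact_tvar scaler_sumr.
rewrite exchange_big /=; apply: eq_bigr => l _.
rewrite /Pm scaler_sumr; apply: eq_bigr => e _.
by rewrite !scalerA mulrC.
Qed.

Lemma lin_L1 : lin = LM 1%:M.
Proof.
rewrite /lin /LM -(pair_bigA _ (fun l k => (1%:M : 'M[K]_p) l k *: Pm (l, k))) /=.
apply: eq_bigr => l _; rewrite [RHS](bigD1 l) //= [X in _ + X]big1 ?addr0.
  by rewrite mxE eqxx scale1r.
by move=> k /negPf nk; rewrite mxE eq_sym nk scale0r.
Qed.

Lemma LM_pow M d : LM M ^+ d =
  \sum_(f : {ffun 'I_d -> 'I_p * 'I_p}) (\prod_(t < d) M (f t).1 (f t).2) *: \prod_(t < d) Pm (f t).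
Proof.
rewrite /LM -(card_ord d) -prodr_const card_ord.
rewrite (bigA_distr_bigA (fun (t : 'I_d) (j : 'I_p * 'I_p) => M j.1 j.2 *: Pm j)) /=.
by apply: eq_bigr => f _; rewrite scaler_prod.
Qed.
End KSide.

Section Good.
Variables (K : fieldType) (charK0 : [pchar K] =i pred0) (p D r : nat)
  (cs : 'I_r -> K) (Ms : 'I_r -> 'M[K]_p).
Hypothesis H : forall (Yn an : 'I_p -> 'I_3 -> nat) d, (d < D)%N ->
    \sum_(i < r) cs i * pairing (Ms i) (natmx K Yn *m (natmx K an)^T) ^+ d
    = pairing 1%:M (natmx K Yn *m (natmx K an)^T) ^+ d.

Definition zf d (f : {ffun 'I_d -> 'I_p * 'I_p}) : K :=
  \sum_(i < r) cs i * \prod_(t < d) Ms i (f t).1 (f t).2 -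
  \prod_(t < d) (1%:M : 'M[K]_p) (f t).1 (f t).2.

Lemma zf_sym d (f : {ffun 'I_d -> 'I_p * 'I_p}) (g : {ffun 'I_d -> 'I_d}) :
  injective g -> zf [ffun t => f (g t)] = zf f.
Proof.
move=> inj; rewrite /zf; congr (_ - _).
  apply: eq_bigr => i _; congr (_ * _); rewrite [RHS](reindex_inj inj) /=.
  by apply: eq_bigr => t _; rewrite ffunE.
by rewrite [RHS](reindex_inj inj) /=; apply: eq_bigr => t _; rewrite ffunE.
Qed.

Lemma zf_R d (hd : (d < D)%N) (R : 'M[K]_p) (Yn an : 'I_p -> 'I_3 -> nat) :
  R = natmx K Yn *m (natmx K an)^T ->
  \sum_(f : {ffun 'I_d -> 'I_p * 'I_p}) zf f * \prod_(t < d) R (f t).1 (f t).2 = 0.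
Proof.
move=> hR; have := H Yn an hd; rewrite -hR => e.
rewrite /zf; under eq_bigr do rewrite mulrBl mulr_suml.
rewrite sumrB exchange_big /=.
have pp : forall M : 'M[K]_p, \sum_(f : {ffun 'I_d -> 'I_p * 'I_p})
    (\prod_(t < d) M (f t).1 (f t).2) * \prod_(t < d) R (f t).1 (f t).2 = pairing M R ^+ d.
  by move=> M; rewrite -prod_pair; apply: eq_bigr => f _; rewrite -big_split.
rewrite pp -e; apply/eqP; rewrite subr_eq0; apply/eqP; apply: eq_bigr => i _.
by rewrite -pp mulr_sumr; apply: eq_bigr => f _; rewrite mulrA.
Qed.

Lemma natmx_entry d (S : {set 'I_d}) (lf : 'I_d -> 'I_p) (eps : 'I_d -> 'I_3) (a : 'I_p -> 'I_3 -> nat) l k :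
  \sum_(s in S) (l == lf s)%:R * (a k (eps s))%:R =
  (natmx K (fun l e => #|[set s in S | (lf s == l) && (eps s == e)]|) *m (natmx K a)^T) l k :> K.
Proof.
rewrite !mxE.
have -> : \sum_(e < 3) natmx K (fun l e => #|[set s in S | (lf s == l) && (eps s == e)]|) l e * (natmx K a)^T e k
  = \sum_(e < 3) \sum_(s in S) ((lf s == l) && (eps s == e))%:R * (a k e)%:R.
  apply: eq_bigr => e _; rewrite !mxE -mulr_suml; congr (_ * _).
  rewrite -natr_sum; congr (_%:R); rewrite -sum1_card big_mkcond /= [RHS]big_mkcond /=.
  by apply: eq_bigr => s _; rewrite inE; case: (s \in S); case: (lf s == l); case: (eps s == e).
rewrite exchange_big /=; apply: eq_bigr => s _.
rewrite (bigD1 (eps s)) //= eqxx andbT big1 ?addr0; first by rewrite eq_sym.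
move=> e ne.
by rewrite [eps s == e]eq_sym (negPf ne) andbF mul0r.
Qed.

Lemma fact_neq0 d : (d`!)%:R != 0 :> K.
Proof. by have /pcharf0P -> := charK0; rewrite -lt0n fact_gt0. Qed.

Lemma coefC0 d (hd : (d < D)%N) (a : 'I_p -> 'I_3 -> nat)
  (lf : {ffun 'I_d -> 'I_p}) (eps : {ffun 'I_d -> 'I_3}) :
  \sum_(f : {ffun 'I_d -> 'I_p * 'I_p} | [ffun t => (f t).1] == lf)
     zf f * \prod_(t < d) ((a (f t).2 (eps t))%:R : K) = 0.
Proof.
pose Q (t : 'I_d) (j : 'I_p * 'I_p) : K := (j.1 == lf t)%:R * (a j.2 (eps t))%:R.
have e1 : \sum_(f : {ffun 'I_d -> 'I_p * 'I_p} | [ffun t => (f t).1] == lf)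
     zf f * \prod_(t < d) ((a (f t).2 (eps t))%:R : K) =
   \sum_(f : {ffun 'I_d -> 'I_p * 'I_p}) zf f * \prod_(t < d) Q t (f t).
  rewrite big_mkcond /=; apply: eq_bigr => f _.
  case: eqP => [hf|hf].
    congr (_ * _); apply: eq_bigr => t _; rewrite /Q -hf ffunE eqxx mul1r //.
  have [t ht] : exists t, (f t).1 != lf t.
    case: (boolP [exists t, (f t).1 != lf t]) => [/existsP //|/existsPn hh].
    by case: hf; apply/ffunP => t; rewrite ffunE; have := hh t; rewrite negbK => /eqP.
  by rewrite (bigD1 t) //= /Q (negPf ht) !mul0r mulr0.
apply/eqP; rewrite -(mulrI_eq0 _ (lregP (fact_neq0 d))) e1.
rewrite (tensor_pol (@zf_sym d)); apply/eqP; apply: big1 => S _.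
set R := natmx K (fun l e => #|[set s in S | (lf s == l) && (eps s == e)]|) *m (natmx K a)^T.
have -> : \sum_(f : {ffun 'I_d -> 'I_p * 'I_p}) zf f * \prod_(t < d) \sum_(s in S) Q s (f t) =
   \sum_(f : {ffun 'I_d -> 'I_p * 'I_p}) zf f * \prod_(t < d) R (f t).1 (f t).2.
  apply: eq_bigr => f _; congr (_ * _); apply: eq_bigr => t _.
  by rewrite /R -natmx_entry.
by rewrite (zf_R hd (R := R) (an := a) (Yn := fun l e => #|[set s in S | (lf s == l) && (eps s == e)]|)) // mulr0.
Qed.

Lemma good_lin (a : 'I_p -> 'I_3 -> nat) d (hd : (d < D)%N) :
  \sum_(i < r) cs i *: (glact (Ms i) (lin K a)) ^+ d = (lin K a) ^+ d.
Proof.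
under eq_bigr do rewrite glact_lin LM_pow scaler_sumr.
rewrite lin_L1 LM_pow exchange_big /=.
apply/eqP; rewrite -subr_eq0 -sumrB; apply/eqP.
have e : forall f : {ffun 'I_d -> 'I_p * 'I_p},
  \sum_(i < r) cs i *: ((\prod_(t < d) Ms i (f t).1 (f t).2) *: \prod_(t < d) Pm K a (f t)) -
   (\prod_(t < d) (1%:M : 'M[K]_p) (f t).1 (f t).2) *: \prod_(t < d) Pm K a (f t) =
  zf f *: \prod_(t < d) Pm K a (f t).
  move=> f; rewrite /zf scalerBl; congr (_ - _).
  by rewrite scaler_suml; apply: eq_bigr => i _; rewrite scalerA.
under eq_bigr do rewrite e.
have e2 : forall f : {ffun 'I_d -> 'I_p * 'I_p}, \prod_(t < d) Pm K a (f t) =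
  \sum_(eps : {ffun 'I_d -> 'I_3}) (\prod_(t < d) ((a (f t).2 (eps t))%:R : K)) *:
     \prod_(t < d) tvar K (f t).1 (eps t).
  move=> f; rewrite /Pm.
  rewrite (bigA_distr_bigA (fun (t : 'I_d) (e : 'I_3) => ((a (f t).2 e)%:R : K) *: tvar K (f t).1 e)) /=.
  by apply: eq_bigr => eps _; rewrite scaler_prod.
under eq_bigr do rewrite e2 scaler_sumr.
rewrite exchange_big /=; apply: big1 => eps _.
rewrite (partition_big (fun f : {ffun 'I_d -> 'I_p * 'I_p} => [ffun t => (f t).1]) predT) //=.
apply: big1 => lf _.
rewrite (eq_bigr (fun f => (zf f * \prod_(t < d) ((a (f t).2 (eps t))%:R : K)) *:
     \prod_(t < d) tvar K (lf t) (eps t))); last first.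
  move=> f /eqP hf; rewrite scalerA; congr (_ *: _); apply: eq_bigr => t _.
  by rewrite -hf ffunE.
by rewrite -scaler_suml coefC0 // scale0r.
Qed.

Definition good (q : polT K p) := \sum_(i < r) cs i *: glact (Ms i) q = q.

Lemma good0 : good 0.
Proof. by rewrite /good big1 // => i _; rewrite /glact rmorph0 scaler0. Qed.

Lemma goodD q1 q2 : good q1 -> good q2 -> good (q1 + q2).
Proof.
rewrite /good => h1 h2; rewrite -{2}h1 -{2}h2 -big_split /=; apply: eq_bigr => i _.
by rewrite /glact rmorphD scalerDr.
Qed.

Lemma goodZ (c : K) q : good q -> good (c *: q).
Proof.
rewrite /good => h; rewrite -{2}h scaler_sumr; apply: eq_bigr => i _.
by rewrite /glact linearZ /= !scalerA mulrC.
Qed.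

Lemma goodC (c : K) q : good q -> good (c%:MP * q).
Proof. by rewrite mul_mpolyC; exact: goodZ. Qed.

Lemma good_sum (I : Type) (s : seq I) (P : pred I) (F : I -> polT K p) :
  (forall i, P i -> good (F i)) -> good (\sum_(i <- s | P i) F i).
Proof.
move=> h; elim/big_rec: _ => [|i x Pi gx]; first exact: good0.
by apply: goodD => //; apply: h.
Qed.

Lemma sum_X_lin d (x : 'I_d -> 'I_(p * 3)) (S : {set 'I_d}) :
  \sum_(t in S) 'X_(x t) =
  lin K (fun k e => #|[set t in S | x t == mxvec_index k e]|) :> polT K p.
Proof.
have ex : forall y : 'I_(p * 3), 'X_y = \sum_(ke : 'I_p * 'I_3)
    ((y == mxvec_index ke.1 ke.2)%:R : K) *: 'X_(mxvec_index ke.1 ke.2) :> polT K p.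
  move=> y; case/mxvec_indexP: y => k e.
  rewrite (bigD1 (k, e)) //= eqxx scale1r big1 ?addr0 // => -[k' e'] /= ne.
  case: eqP => [h|]; last by rewrite scale0r.
  have : (k, e) == (k', e').
    case: (@curry_mxvec_bij p 3) => g g1 _.
    have h1 := g1 (k, e) isT; have h2 := g1 (k', e') isT.
    by rewrite -h1 -h2 /= h.
  by rewrite eq_sym (negPf ne).
under eq_bigr do rewrite ex.
rewrite exchange_big /= /lin (pair_bigA _ (fun k e => (#|[set t in S | x t == mxvec_index k e]|%:R : K) *: tvar K k e)) /=.
apply: eq_bigr => -[k e] _ /=; rewrite -scaler_suml; congr (_ *: _).
rewrite -natr_sum -sum1_card.
congr (_%:R); rewrite (eq_bigl (fun i => (i \in S) && (x i == mxvec_index k e))); last by move=> i; rewrite inE.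
rewrite big_mkcondr /=; apply: eq_bigr => i _; by case: (x i == _).
Qed.

Lemma X_s2m (s : seq 'I_(p * 3)) : 'X_[s2m s] = \prod_(i <- s) 'X_i :> polT K p.
Proof.
elim: s => [|i s IH].
  by rewrite big_nil -mpolyX0; congr 'X_[_]; apply/mnmP => j; rewrite mnmE mnm0E.
rewrite big_cons -IH -mpolyXD; congr 'X_[_]; apply/mnmP => j.
by rewrite mnmDE !mnmE /=.
Qed.

Lemma good_X (m : 'X_{1..p * 3}) : (mdeg m < D)%N -> good 'X_[m].
Proof.
move=> hm.
set s := m2s m; set d := size s.
have hd : (d < D)%N by rewrite /d size_m2s.
pose y (t : 'I_d) : polT K p := 'X_(tnth (in_tuple s) t).
have eX : 'X_[m] = \prod_(t < d) y t.
  rewrite -{1}(s2mK m) X_s2m -/s.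
  exact: (big_tuple 1 *%R (in_tuple s) xpredT (fun i => 'X_i : polT K p)).
have hP := polar_prod (B := polT K p) y.
have gR : good ((d`!)%:R * \prod_(t < d) y t).
  rewrite hP; apply: good_sum => S _.
  have -> : ((-1) ^+ (d - #|S|) : polT K p) = ((-1) ^+ (d - #|S|) : K)%:MP.
    by rewrite rmorphXn /= rmorphN1.
  apply: goodC; rewrite /y sum_X_lin.
  rewrite /good; rewrite -[RHS](good_lin _ hd); apply: eq_bigr => i _.
  by rewrite /glact rmorphXn.
have -> : 'X_[m] = ((d`!)%:R^-1 : K)%:MP * ((d`!)%:R * \prod_(t < d) y t).
  rewrite -mpolyC_nat mulrA -rmorphM /= mulVf ?fact_neq0 //.
  by rewrite rmorph1 mul1r.
exact: goodC.
Qed.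

Lemma good_all q : (msize q <= D)%N -> good q.
Proof.
move=> hq; rewrite [q]mpolyE big_seq; apply: good_sum => m hm; apply: goodZ.
apply: good_X; exact: leq_trans (msize_mdeg_lt hm) hq.
Qed.
End Good.


Definition actA (K : fieldType) p (g : 'M[K]_p) (A : 'I_p -> 'M[K]_3) : 'I_p -> 'M[K]_3 :=
  fun k => \sum_(l < p) g l k *: A l.

Lemma coords_vec (K : fieldType) p (A : 'I_p -> 'M[K]_3) k e :
  coords A (mxvec_index k e) = A k (pair_i e) (pair_j e).
Proof. by rewrite /coords mxvecE mxE. Qed.

Lemma glact_eval (K : fieldType) p (g : 'M[K]_p) (A : 'I_p -> 'M[K]_3) q :
  (glact g q).@[coords A] = q.@[coords (actA g A)].
Proof.
rewrite /glact comp_mpoly_meval; apply: meval_eq => x.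
have [[k e] ->] : exists ke : 'I_p * 'I_3, x = mxvec_index ke.1 ke.2.
  by case/mxvec_indexP: x => k e; exists (k, e).
rewrite coords_vec /gl_images tnth_mktuple mxvecE mxE.
rewrite /actA summxE raddf_sum /=; apply: eq_bigr => l _.
by rewrite mevalM mevalC /tvar mevalXU coords_vec !mxE.
Qed.

Lemma evalF_glact (K : fieldType) p (g : 'M[K]_p) F A :
  evalF (glact_mx g F) A = evalF F (actA g A).
Proof. by apply/matrixP => i j; rewrite /evalF /glact_mx !mxE glact_eval. Qed.

Lemma evalF0 (K : fieldType) p A : evalF (0 : 'M[polT K p]_3) A = 0.
Proof. by apply/matrixP => i j; rewrite !mxE meval0. Qed.

Lemma evalFD (K : fieldType) p (F G : 'M[polT K p]_3) A :
  evalF (F + G) A = evalF F A + evalF G A.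
Proof. by apply/matrixP => i j; rewrite !mxE mevalD. Qed.

Lemma evalFZ (K : fieldType) p (c : K) (F : 'M[polT K p]_3) A :
  evalF (c%:MP *: F) A = c *: evalF F A.
Proof. by apply/matrixP => i j; rewrite !mxE mevalM mevalC. Qed.

Lemma actA_conj (K : fieldType) p (g : 'M[K]_p) (h : 'M[K]_3) A :
  actA g (fun k => h *m A k *m h^T) = fun k => h *m actA g A k *m h^T.
Proof.
apply: functional_extensionality => k; rewrite /actA mulmx_sumr mulmx_suml; apply: eq_bigr => l _.
by rewrite scalemxAl scalemxAr.
Qed.

Lemma actA_skew (K : fieldType) p (g : 'M[K]_p) (A : 'I_p -> 'M[K]_3) :
  (forall k, Defs.skew (A k)) -> forall k : 'I_p, Defs.skew (actA g A k).
Proof.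
move=> sk k; rewrite /Defs.skew /actA raddf_sum /= -sumrN; apply: eq_bigr => l _.
by rewrite linearZ /= sk scalerN.
Qed.

Lemma equiv_glact (K : fieldType) p (g : 'M[K]_p) F :
  equivariant F -> equivariant (glact_mx g F).
Proof.
move=> eF h A hS sk; rewrite !evalF_glact actA_conj eF //.
exact: actA_skew.
Qed.

Lemma GLspan_equiv (K : fieldType) p U (F : 'M[polT K p]_3) :
  (forall G, U G -> equivariant G) -> GLspan U F -> equivariant F.
Proof.
move=> hU; apply.
- by move=> g A _ _; rewrite !evalF0 mulmx0 mul0mx.
- move=> G H eG eH g A hS sk; rewrite !evalFD eG // eH //.
  by rewrite mulmxDr mulmxDl.
- move=> c G eG g A hS sk; rewrite !evalFZ eG //.
  by rewrite -scalemxAr -scalemxAl.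
- by move=> g G _ eG; exact: equiv_glact.
- exact: hU.
Qed.


Lemma comp_mpoly_assoc (R : comRingType) n k l (q : {mpoly R[n]})
  (lq : n.-tuple {mpoly R[k]}) (lr : k.-tuple {mpoly R[l]}) :
  (q \mPo lq) \mPo lr = q \mPo [tuple (tnth lq i) \mPo lr | i < n].
Proof.
rewrite [q]mpolyE.
rewrite (raddf_sum (comp_mpoly lq)) (raddf_sum (comp_mpoly lr)) (raddf_sum (comp_mpoly _)).
apply: eq_bigr => m _.
rewrite /= !comp_mpolyZ comp_mpolyX; congr (_ *: _).
rewrite comp_mpolyX rmorph_prod /=; apply: eq_bigr => i _.
by rewrite rmorphXn /= tnth_mktuple.
Qed.

Lemma glact_comp (K : fieldType) p (L h : 'M[K]_p) q :
  glact L (glact h q) = glact (L *m h) q.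
Proof.
rewrite /glact comp_mpoly_assoc; congr comp_mpoly.
apply: eq_from_tnth => x; rewrite !tnth_mktuple.
case/mxvec_indexP: x => k e.
rewrite !mxvecE !mxE raddf_sum /=.
under eq_bigr do rewrite mul_mpolyC comp_mpolyZ -/(glact L _) glact_tvar scaler_sumr.
rewrite exchange_big /=; apply: eq_bigr => m _; rewrite mxE mul_mpolyC scaler_suml.
by apply: eq_bigr => j _; rewrite scalerA mulrC.
Qed.

Lemma glact_mx_comp (K : fieldType) p (L h : 'M[K]_p) F :
  glact_mx L (glact_mx h F) = glact_mx (L *m h) F.
Proof. by apply/matrixP => i j; rewrite !mxE glact_comp. Qed.

Lemma first3_glact (K : fieldType) p (h : 'M[K]_p) (F : 'M[polT K p]_3) :
  (forall (l k : 'I_p), (3 <= l)%N -> h l k = 0) -> depends_on_first3 (glact_mx h F).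
Proof.
move=> h0 A B _ _ hAB; rewrite !evalF_glact; congr evalF.
apply: functional_extensionality => k; rewrite /actA; apply: eq_bigr => l _.
case: (ltnP l 3) => hl; first by rewrite hAB.
by rewrite h0 // !scale0r.
Qed.

Lemma Zset_decomp (K : fieldType) p (M : 'M[K]_p) : Zset M ->
  exists L h : 'M[K]_p, [/\ L \in unitmx, M = L *m h &
    forall (l k : 'I_p), (3 <= l)%N -> h l k = 0].
Proof.
case=> Y [a ->]; set M0 := Y *m a^T.
have hr : (\rank M0 <= 3)%N by apply: leq_trans (mxrankM_maxl _ _) (rank_leq_col _).
exists (col_ebase M0), (pid_mx (\rank M0) *m row_ebase M0); split.
- exact: col_ebase_unit.
- by rewrite mulmxA mulmx_ebase.
- move=> l k hl; rewrite mxE; apply: big1 => j _; rewrite mxE.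
  have : (l < \rank M0)%N = false by apply/negbTE; rewrite -leqNgt (leq_trans hr hl).
  by move=> ->; rewrite andbF mul0r.
Qed.

Theorem corollary2p8 (K : fieldType) (charK0 : [pchar K] =i pred0)
  (p : nat) (hp : (3 <= p)%N) :
  forall F : 'M[polT K p]_3,
    equivariant F <->
    GLspan (fun G : 'M[polT K p]_3 => equivariant G /\ depends_on_first3 G) F.
Proof.
move=> F; split; last first.
  by apply: GLspan_equiv => G [].
move=> eF.
pose D := \sum_(i < 3) \sum_(j < 3) msize (F i j).
have [r [cs [Ms [Zs H]]]] := K_main charK0 p D.
have gd : forall i j, F i j = \sum_(l < r) cs l *: glact (Ms l) (F i j).
  move=> i j; symmetry; apply: (@good_all K charK0 p D r cs Ms H).
  rewrite /D (bigD1 i) //= (bigD1 j) //=.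
  exact: leq_trans (leq_addr _ _) (leq_addr _ _).
have eqF : F = \sum_(l < r) (cs l)%:MP *: glact_mx (Ms l) F.
  apply/matrixP => i j; rewrite summxE [LHS]gd; apply: eq_bigr => l _.
  by rewrite !mxE mul_mpolyC.
move=> S h0 hD hZ hG hU; rewrite eqF.
elim/big_rec: _ => [|l x _ Sx]; first exact: h0.
apply: hD => //; apply: hZ.
have [L [h [uL -> h3]]] := Zset_decomp (Zs l).
rewrite -glact_mx_comp; apply: hG => //; apply: hU; split.
  exact: equiv_glact.
exact: first3_glact.
Qed.
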